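(* Let $O=(W,A,Z,R,RY)$ denote the observed data, with $W$ pre-exposure covariates, $A\in\{0,1\}$ a binary exposure, $Z$ a nonempty set of additional covariates, $R\in\{0,1\}$ a selection indicator, and $Y$ a real outcome observed only when $R=1$; let $(W;Z)$ be an $s$-admissible pair with $Z\neq\emptyset$ and $P$ the observed-data distribution. Let $\pi_A(W)=\Pr(A=1\mid W)$, $\pi_R(W,A,Z)=\Pr(R=1\mid W,A,Z)$, $Q_1(W,A,Z)=\mathbb{E}[Y\mid W,A,Z,R=1]$, $Q_2(W,A)=\mathbb{E}_{Z\mid W,A}Q_1(W,A,Z)$, and let $\psi=\Psi[P]=\mathbb{E}_W[Q_2(W,1)-Q_2(W,0)]$ be the ATE given by the $s$-formula. For putative models $(\tilde Q_1,\tilde Q_2,\tilde\pi_A,\tilde\pi_R)$ define $$\tilde D(O)=\frac{A-\tilde\pi_A(W)}{\tilde\pi_A(W)[1-\tilde\pi_A(W)]}\,\frac{R}{\tilde\pi_R(W,A,Z)}\big[Y-\tilde Q_1(W,A,Z)\big]+\frac{A-\tilde\pi_A(W)}{\tilde\pi_A(W)[1-\tilde\pi_A(W)]}\big[\tilde Q_1(W,A,Z)-\tilde Q_2(W,A)\big]+\tilde Q_2(W,1)-\tilde Q_2(W,0)-\psi,$$ i.e. the EIF of $\Psi$ at $P$ with $(Q_1,Q_2,\pi_A,\pi_R)$ replaced by the putative models while $\psi$ is kept as is. Then $\mathbb{E}_P\tilde D(O)=0$ is a valid (robust) estimating equation for $\psi=\Psi[P]$ (i.e. it holds at the true ATE $\psi$)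 provided at least one of the following holds: (1) the sequential regression models are correctly specified: $\tilde Q_1=Q_1$ and $\tilde Q_2=Q_2$; (2) the exposure and selection propensity score models are correctly specified: $\tilde\pi_A=\pi_A$ and $\tilde\pi_R=\pi_R$; (3) the exposure propensity score model and the mean-imputation model are correctly specified: $\tilde\pi_A=\pi_A$ and $\tilde Q_1=Q_1$.
   Context: An $s$-admissible pair $(W;Z)$ is a pair of covariate sets for which the ATE $\mathbb{E}[Y^{1}-Y^{0}]$ (with $Y^a$ the potential outcome under exposure $a$) is identified from the selected-sample data via the $s$-formula above: $W$ suffices to control confounding of $A$ on $Y$ and $(W,A,Z)$ renders the outcome independent of selection $R$ (so that $Y\perp R\mid W,A,Z$), together with positivity ($0<\pi_A<1$, $\pi_R>0$); the putative propensity models are likewise assumed to satisfy $0<\tilde\pi_A<1$, $\tilde\pi_R>0$. ''Correctly specified'' means the putative model equals the corresponding true nuisance function. The term $RY$ is well defined even when $Y$ is unobserved since it is multiplied by $R$. *)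

(* Defs.v *)
From mathcomp Require Import all_boot all_order all_algebra all_classical all_reals all_analysis.
Set Implicit Arguments. Unset Strict Implicit. Unset Printing Implicit Defensive.
Import Order.TTheory GRing.Theory Num.Theory.
Local Open Scope ring_scope.
Local Open Scope ereal_scope.
Local Open Scope ring_scope.
Local Open Scope classical_set_scope.

(* [cond_mean P V X f] : the function f : T -> R is (a version of) the
   conditional expectation E[X | V] under P, i.e. f (on the range of the
   measurable V) is measurable, X is integrable, and for every measurable
   test function g with g(V) X integrable, E[g(V) X] = E[g(V) f(V)]. *)
Definition cond_mean d (Omega : measurableType d) (R : realType)
    (P : probability Omega R) dT (T : measurableType dT)
    (V : Omega -> T) (X : Omega -> R) (f : T -> R) : Prop :=
  [/\ measurable_fun setT f,
  P.-integrable setT (EFin \o X) &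
  forall g : T -> R, measurable_fun setT g ->
    P.-integrable setT (EFin \o (fun w => g (V w) * X w)) ->
    (\int[P]_w (g (V w) * X w)%:E = \int[P]_w (g (V w) * f (V w))%:E)%E].

(* [cond_mean_sel P V S X f] : f is (a version of) E[X | V, S = 1], i.e.
   f is measurable, S X is integrable, and for every measurable test function
   g with 1{S=1} g(V) X integrable, E[1{S=1} g(V) X] = E[1{S=1} g(V) f(V)]. *)
Definition cond_mean_sel d (Omega : measurableType d) (R : realType)
    (P : probability Omega R) dT (T : measurableType dT)
    (V : Omega -> T) (S : Omega -> bool) (X : Omega -> R) (f : T -> R) : Prop :=
  [/\ measurable_fun setT f,
  P.-integrable setT (EFin \o (fun w => (S w : nat)%:R * X w)) &
  forall g : T -> R, measurable_fun setT g ->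
    P.-integrable setT (EFin \o (fun w => (S w : nat)%:R * g (V w) * X w)) ->
    (\int[P]_w ((S w : nat)%:R * g (V w) * X w)%:E
       = \int[P]_w ((S w : nat)%:R * g (V w) * f (V w))%:E)%E].

Definition b2r (R : realType) (b : bool) : R := (b : nat)%:R.

Definition Hcov (R : realType) (TW : Type) (pA : TW -> R) (w : TW) (a : bool) : R :=
  (b2r R a - pA w) / (pA w * (1 - pA w)).

Definition Dtilde (R : realType) (TW TZ : Type)
    (Q1t : TW -> bool -> TZ -> R) (Q2t : TW -> bool -> R)
    (pAt : TW -> R) (pRt : TW -> bool -> TZ -> R) (psi : R)
    (w : TW) (a : bool) (z : TZ) (r : bool) (y : R) : R :=
  Hcov pAt w a * (b2r R r / pRt w a z) * (y - Q1t w a z)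
  + Hcov pAt w a * (Q1t w a z - Q2t w a)
  + Q2t w true - Q2t w false - psi.

(* Main.v *)
Require Import Defs.
From mathcomp Require Import all_boot all_order all_algebra all_classical all_reals all_analysis.
From mathcomp Require Import lra ring.
Import Order.TTheory GRing.Theory Num.Theory.
Local Open Scope ring_scope.
Local Open Scope classical_set_scope.

Lemma inv_meas (R : realType) : measurable_fun setT (@GRing.inv R).
Proof.
have -> : (@GRing.inv R) = fun x : R => if x == 0 then 0 else x^-1.
  by apply/funext => x; case: eqP => [->|]; rewrite ?invr0.
apply: measurable_fun_if => //.
  by apply: measurable_realfun.measurable_fun_eqr.
rewrite setTI.
have -> : (fun x : R => x == 0) @^-1` [set false] = ~` [set 0].
  by apply/seteqP; split => x /=; case: eqP.
apply: measurable_realfun.open_continuous_measurable_fun.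
  by apply: closed_openC; apply: accessible_closed_set1; exact: hausdorff_accessible.
move=> x; rewrite inE => /eqP x0.
exact: inv_continuous.
Qed.

Lemma key d (Om : measurableType d) (R : realType) (P : probability Om R)
  dT (T : measurableType dT) (V : Om -> T) (mV : measurable_fun setT V)
  (M X : Om -> R) (f : T -> R)
  (mM : measurable_fun setT M) (mX : measurable_fun setT X) (mf : measurable_fun setT f)
  (bM : forall x, `|M x| <= 1)
  (iMX : P.-integrable setT (EFin \o (fun x => M x * X x)))
  (H : forall (c : T -> R) (C : R), measurable_fun setT c -> (forall t, `|c t| <= C) ->
     (\int[P]_x (M x * c (V x) * X x)%:E = \int[P]_x (M x * c (V x) * f (V x))%:E)%E)
  (g : T -> R) (mg : measurable_fun setT g)
  (ig : P.-integrable setT (EFin \o (fun x => M x * g (V x) * (X x - f (V x))))) :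
  (\int[P]_x (M x * g (V x) * (X x - f (V x)))%:E = 0)%E.
Proof.
pose c (n : nat) t := if (`|g t| <= n%:R) && (`|f t| <= n%:R) then g t else 0.
have mc n : measurable_fun setT (c n).
  apply: measurable_fun_ifT => //.
  by apply: measurable_and; apply: measurable_realfun.measurable_fun_ler => //;
    apply: measurableT_comp.
have bc n t : `|c n t| <= n%:R.
  by rewrite /c; case: ifP => [/andP[]//|_]; rewrite normr0.
have bcf n t : `|c n t * f t| <= n%:R * n%:R.
  rewrite /c; case: ifP => [/andP[h1 h2]|_]; last by rewrite mul0r normr0 mulr_ge0.
  by rewrite normrM ler_pM.
have bcg n t : `|c n t| <= `|g t|.
  by rewrite /c; case: ifP => _ //; rewrite normr0.
have mcV n : measurable_fun setT (fun x => c n (V x)).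
  exact: measurableT_comp.
have Hn n : (\int[P]_x (M x * c n (V x) * (X x - f (V x)))%:E = 0)%E.
  have i1 : P.-integrable setT (EFin \o (fun x => M x * c n (V x) * X x)).
    apply: (le_integrable measurableT _ _ (integrableZl measurableT n%:R iMX)).
      apply/measurable_realfun.measurable_EFinP; apply: measurable_realfun.measurable_funM => //.
      exact: measurable_realfun.measurable_funM.
    move=> x _ /=; rewrite !normrM lee_fin [`|n%:R|]ger0_norm //.
    have := bc n (V x); have := normr_ge0 (M x); have := normr_ge0 (X x).
    move: (`|M x|) (`|X x|) (`|c n (V x)|) => a b e b0 a0 ebd.
    by rewrite mulrAC [X in X <= _]mulrC ler_wpM2r // mulr_ge0.
  have i2 : P.-integrable setT (EFin \o (fun x => M x * c n (V x) * f (V x))).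
    apply: (le_integrable measurableT _ _ (finite_measure_integrable_cst P (n%:R * n%:R) measurableT)).
      apply/measurable_realfun.measurable_EFinP; apply: measurable_realfun.measurable_funM => //.
        exact: measurable_realfun.measurable_funM.
      exact: measurableT_comp.
    move=> x _ /=; rewrite lee_fin -mulrA normrM [X in _ <= X]ger0_norm ?mulr_ge0 //.
    by rewrite -[X in _ <= X]mul1r ler_pM.
  rewrite (eq_integral (fun x => (M x * c n (V x) * X x)%:E - (M x * c n (V x) * f (V x))%:E)%E); last first.
    by move=> x _; rewrite -EFinB mulrBr.
  rewrite integralB_EFin // (H _ n%:R (mc n) (bc n)) subee //.
  by apply: integrable_fin_num => //.
have := @dominated_convergence _ _ _ P setT measurableT
  (fun n x => (M x * c n (V x) * (X x - f (V x)))%:E)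
  (fun x => (M x * g (V x) * (X x - f (V x)))%:E)
  (fun x => (`|M x * g (V x) * (X x - f (V x))|)%:E).
case.
- move=> n; apply/measurable_realfun.measurable_EFinP; apply: measurable_realfun.measurable_funM => //.
    exact: measurable_realfun.measurable_funM.
  by apply: measurable_realfun.measurable_funB => //; exact: measurableT_comp.
- exact: measurable_int ig.
- apply: aeW => x _.
  apply: cvg_near_cst; near=> n.
  rewrite /c ifT //; apply/andP; split; near: n; exact: nbhs_infty_ger.
- exact: (integrable_norm ig).
- apply: aeW => x n _; rewrite lee_fin !normrM ler_wpM2r // ler_wpM2l //.
- move=> _ _ h.
  have h2 : [sequence (\int[P]_(x in setT) (M x * c n (V x) * (X x - f (V x)))%:E)%E]_n @ \oo --> (0 : \bar R).
    apply: cvg_near_cst; apply: nearW => n; exact: Hn.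
  exact: (cvg_unique _ h h2).
Unshelve. all: end_near.
Qed.

Lemma intE d (Om : measurableType d) (R : realType) (P : probability Om R) (f g : Om -> R) :
  (forall x, f x = g x) -> P.-integrable setT (EFin \o f) -> P.-integrable setT (EFin \o g).
Proof. by move=> e; apply: eq_integrable => // x _ /=; rewrite e. Qed.

Lemma intB d (Om : measurableType d) (R : realType) (P : probability Om R) (f g : Om -> R) :
  P.-integrable setT (EFin \o f) -> P.-integrable setT (EFin \o g) ->
  P.-integrable setT (EFin \o (fun x => f x - g x)).
Proof.
move=> i1 i2; have := integrableB measurableT i1 i2.
by apply: eq_integrable => // x _ /=; rewrite EFinB.
Qed.

Lemma intD d (Om : measurableType d) (R : realType) (P : probability Om R) (f g : Om -> R) :
  P.-integrable setT (EFin \o f) -> P.-integrable setT (EFin \o g) ->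
  P.-integrable setT (EFin \o (fun x => f x + g x)).
Proof.
move=> i1 i2; have := integrableD measurableT i1 i2.
by apply: eq_integrable => // x _ /=; rewrite EFinD.
Qed.

Lemma K1 d (Om : measurableType d) (R : realType) (P : probability Om R)
  dT (T : measurableType dT) (V : Om -> T) (mV : measurable_fun setT V)
  (X : Om -> R) (f : T -> R) (hc : cond_mean P V X f)
  (g : T -> R) (mg : measurable_fun setT g)
  (ig : P.-integrable setT (EFin \o (fun x => g (V x) * (X x - f (V x))))) :
  (\int[P]_x (g (V x) * (X x - f (V x)))%:E = 0)%E.
Proof.
case: hc => mf iX Hc.
have mX : measurable_fun setT X.
  exact/measurable_realfun.measurable_EFinP/(measurable_int _ iX).
have := @key d Om R P dT T V mV (fun _ => 1) X f (measurable_cst _) mX mf _ _ _ g mg _.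
under eq_integral do rewrite mul1r.
apply.
- by move=> _; rewrite normr1.
- by apply: intE iX => x; rewrite mul1r.
- move=> c C mc bc.
  under eq_integral do rewrite mul1r.
  under [in RHS]eq_integral do rewrite mul1r.
  apply: Hc => //.
  apply: (le_integrable measurableT _ _ (integrableZl measurableT `|C| iX)).
    apply/measurable_realfun.measurable_EFinP; apply: measurable_realfun.measurable_funM => //.
    exact: measurableT_comp.
  move=> x _ /=; rewrite !normrM lee_fin (ger0_norm (normr_ge0 C)).
  by rewrite ler_wpM2r // (le_trans (bc _)) // ler_norm.
- by apply: intE ig => x; rewrite mul1r.
Qed.

Lemma K2 d (Om : measurableType d) (R : realType) (P : probability Om R)
  dT (T : measurableType dT) (V : Om -> T) (mV : measurable_fun setT V)
  (S : Om -> bool) (mS : measurable_fun setT S)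
  (X : Om -> R) (mX : measurable_fun setT X) (f : T -> R) (hc : cond_mean_sel P V S X f)
  (g : T -> R) (mg : measurable_fun setT g)
  (ig : P.-integrable setT (EFin \o (fun x => b2r R (S x) * g (V x) * (X x - f (V x))))) :
  (\int[P]_x (b2r R (S x) * g (V x) * (X x - f (V x)))%:E = 0)%E.
Proof.
case: hc => mf iX Hc.
have mM : measurable_fun setT (fun x => b2r R (S x)).
  by apply: (measurableT_comp (f := b2r R)) => //.
have bM x : `|b2r R (S x)| <= 1.
  by rewrite /b2r; case: (S x); rewrite ?normr1 ?normr0.
apply: (@key d Om R P dT T V mV (fun x => b2r R (S x)) X f mM mX mf bM iX _ g mg ig).
move=> c C mc bc.
apply: Hc => //.
apply: (le_integrable measurableT _ _ (integrableZl measurableT `|C| iX)).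
  apply/measurable_realfun.measurable_EFinP; apply: measurable_realfun.measurable_funM => //.
  apply: measurable_realfun.measurable_funM => //.
  exact: measurableT_comp.
move=> x _ /=; rewrite !normrM lee_fin (ger0_norm (normr_ge0 C)).
rewrite mulrAC [Y in Y <= _]mulrC ler_wpM2r ?mulr_ge0 //.
by rewrite (le_trans (bc _)) // ler_norm.
Qed.

Lemma alg4 (R : realType) (p : R) (F : bool -> R) (a : bool) : 0 < p < 1 ->
  (b2r R a - p) / (p * (1 - p)) * F a - (F true - F false)
  = (F true / p + F false / (1 - p)) * (b2r R a - p).
Proof.
move=> /andP[p0 p1].
have h0 : p != 0 by rewrite gt_eqF.
have h1 : 1 - p != 0 by rewrite subr_eq0 gt_eqF.
by case: a; rewrite /b2r /=; field; rewrite h0 h1.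
Qed.
Lemma alg2 (R : realType) (h s q r : R) : r != 0 -> h * (s / r) * q - h * q = h * q / r * (s - r).
Proof. by move=> r0; field. Qed.

Lemma sum0 d (Om : measurableType d) (R : realType) (P : probability Om R) (f g : Om -> R) :
  P.-integrable setT (EFin \o f) -> P.-integrable setT (EFin \o g) ->
  (\int[P]_x (f x)%:E = 0)%E ->
  (\int[P]_x (f x + g x)%:E = \int[P]_x (g x)%:E)%E.
Proof.
move=> i1 i2 e.
have := integralD_EFin measurableT i1 i2.
rewrite /= e add0e => <-.
by apply: eq_integral => x _ /=; rewrite EFinD.
Qed.


Lemma sum0' d (Om : measurableType d) (R : realType) (P : probability Om R) (f g : Om -> R) :
  P.-integrable setT (EFin \o f) -> P.-integrable setT (EFin \o g) ->
  (\int[P]_x (f x)%:E = 0)%E -> (\int[P]_x (g x)%:E = 0)%E ->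
  (\int[P]_x (f x + g x)%:E = 0)%E.
Proof. by move=> i1 i2 e1 e2; rewrite sum0. Qed.

Arguments intE {d Om R P f g}.
Arguments intB {d Om R P f g}.
Arguments intD {d Om R P f g}.
Arguments sum0' {d Om R P f g}.

Lemma algD1 (R : realType) (t1 t2 a b psi : R) :
  t1 + t2 + a - b - psi = t1 + (t2 + (a - b - psi)).
Proof. by ring. Qed.

Lemma algD2 (R : realType) (h k y q1 q1t q2 q2t a a_t b bt psi : R) :
  h*k*(y - q1t) + h*(q1t - q2t) + a_t - bt - psi
  = h*k*(y-q1) + ((h*k*(q1 - q1t) - h*(q1 - q1t)) + (h*(q1 - q2)
     + ((h*(q2 - q2t) - ((a - a_t) - (b - bt))) + (a - b - psi)))).
Proof. by ring. Qed.

Lemma algD3 (R : realType) (t1 h q1 q2 q2t a a_t b bt psi : R) :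
  t1 + h*(q1 - q2t) + a_t - bt - psi
  = t1 + (h*(q1-q2) + ((h*(q2 - q2t) - ((a - a_t) - (b - bt))) + (a - b - psi))).
Proof. by ring. Qed.

Lemma alg_i2 (R : realType) (h k y a b : R) :
  h*k*(y - a) - h*k*(y - b) - (h*b - h*a) = h*k*(b - a) - h*(b - a).
Proof. by ring. Qed.

Lemma alg_i4 (R : realType) (h a a_t a1 a1t a0 a0t : R) :
  h*a - h*a_t - ((a1 - a1t) - (a0 - a0t)) = h*(a - a_t) - ((a1 - a1t) - (a0 - a0t)).
Proof. by ring. Qed.

Theorem mainTheorem2
  (R : realType) (d : measure_display) (Omega : measurableType d)
  (P : probability Omega R)
  (dW : measure_display) (TW : measurableType dW)
  (dZ : measure_display) (TZ : measurableType dZ)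
  (* observed data O = (W, A, Z, R, R*Y) *)
  (W : Omega -> TW) (A : Omega -> bool) (Z : Omega -> TZ)
  (S : Omega -> bool) (Y : Omega -> R)
  (mW : measurable_fun setT W) (mA : measurable_fun setT A)
  (mZ : measurable_fun setT Z) (mS : measurable_fun setT S)
  (mY : measurable_fun setT Y)
  (* true nuisance functions *)
  (piA : TW -> R) (piR : TW -> bool -> TZ -> R)
  (Q1 : TW -> bool -> TZ -> R) (Q2 : TW -> bool -> R)
  (HpiA : cond_mean P W (fun w => b2r R (A w)) piA)
  (HpiR : cond_mean P (fun w => (W w, A w, Z w)) (fun w => b2r R (S w))
            (fun x => piR x.1.1 x.1.2 x.2))
  (HQ1 : cond_mean_sel P (fun w => (W w, A w, Z w)) S Y
            (fun x => Q1 x.1.1 x.1.2 x.2))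
  (HQ2 : cond_mean P (fun w => (W w, A w))
            (fun w => Q1 (W w) (A w) (Z w)) (fun x => Q2 x.1 x.2))
  (* positivity *)
  (posA : forall w, 0 < piA w < 1) (posR : forall w a z, 0 < piR w a z)
  (* putative models, with positivity *)
  (Q1t : TW -> bool -> TZ -> R) (Q2t : TW -> bool -> R)
  (piAt : TW -> R) (piRt : TW -> bool -> TZ -> R)
  (mQ1t : measurable_fun setT (fun x : TW * bool * TZ => Q1t x.1.1 x.1.2 x.2))
  (mQ2t : measurable_fun setT (fun x : TW * bool => Q2t x.1 x.2))
  (mpiAt : measurable_fun setT piAt)
  (mpiRt : measurable_fun setT (fun x : TW * bool * TZ => piRt x.1.1 x.1.2 x.2))
  (posAt : forall w, 0 < piAt w < 1) (posRt : forall w a z, 0 < piRt w a z)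
  (* the target functional psi = Psi[P] given by the s-formula *)
  (psi : R)
  (Hpsi : (\int[P]_w (Q2 (W w) true - Q2 (W w) false)%:E = psi%:E)%E)
  (* integrability (regularity) of the terms entering D~ *)
  (HintY : forall h : TW -> bool -> TZ -> R, (h = Q1t \/ h = Q1) ->
       P.-integrable setT (EFin \o (fun w =>
          Hcov piAt (W w) (A w) * (b2r R (S w) / piRt (W w) (A w) (Z w))
            * (Y w - h (W w) (A w) (Z w)))))
  (HintQ : forall h : TW -> bool -> TZ -> R,
     (h = Q1t \/ h = Q1 \/ h = (fun w a _ => Q2t w a) \/ h = (fun w a _ => Q2 w a)) ->
       P.-integrable setT (EFin \o (fun w =>
          Hcov piAt (W w) (A w) * h (W w) (A w) (Z w))))
  (Hint2 : forall a : bool,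
     P.-integrable setT (EFin \o (fun w => Q2t (W w) a)) /\
     P.-integrable setT (EFin \o (fun w => Q2 (W w) a))) :
  [\/ Q1t = Q1 /\ Q2t = Q2,
      piAt = piA /\ piRt = piR
    | piAt = piA /\ Q1t = Q1] ->
  (\int[P]_w (Dtilde Q1t Q2t piAt piRt psi
                 (W w) (A w) (Z w) (S w) (Y w))%:E = 0)%E.

Proof.
have mb : measurable_fun setT (b2r R) by [].
have mAr : measurable_fun setT (fun w => b2r R (A w)) := measurableT_comp mb mA.
have mV3 : measurable_fun setT (fun w => (W w, A w, Z w)).
  by apply: measurable_fun_pair => //; apply: measurable_fun_pair.
have mV2 : measurable_fun setT (fun w => (W w, A w)).
  by apply: measurable_fun_pair.
have mHc : forall pA : TW -> R, measurable_fun setT pA ->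
    measurable_fun setT (fun x : TW * bool => Hcov pA x.1 x.2).
  move=> pA mpA; rewrite /Hcov; apply: measurable_realfun.measurable_funM.
    apply: measurable_realfun.measurable_funB.
      exact: (measurableT_comp mb measurable_snd).
    exact: (measurableT_comp mpA measurable_fst).
  apply: (measurableT_comp (inv_meas R)).
  apply: measurable_realfun.measurable_funM.
    exact: (measurableT_comp mpA measurable_fst).
  apply: measurable_realfun.measurable_funB => //.
  exact: (measurableT_comp mpA measurable_fst).
have mHc3 : forall pA : TW -> R, measurable_fun setT pA ->
    measurable_fun setT (fun x : TW * bool * TZ => Hcov pA x.1.1 x.1.2).
  by move=> pA mpA; apply: (measurableT_comp (mHc _ mpA) measurable_fst).
have mpiA : measurable_fun setT piA by case: HpiA.
have mpiR : measurable_fun setT (fun x : TW * bool * TZ => piR x.1.1 x.1.2 x.2) by case: HpiR.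
have mQ1 : measurable_fun setT (fun x : TW * bool * TZ => Q1 x.1.1 x.1.2 x.2) by case: HQ1.
have mQ2 : measurable_fun setT (fun x : TW * bool => Q2 x.1 x.2) by case: HQ2.
have F1 : forall (pA : TW -> R) (rho : TW -> bool -> TZ -> R),
    measurable_fun setT pA ->
    measurable_fun setT (fun x : TW * bool * TZ => rho x.1.1 x.1.2 x.2) ->
    P.-integrable setT (EFin \o (fun w =>
      Hcov pA (W w) (A w) * (b2r R (S w) / rho (W w) (A w) (Z w))
        * (Y w - Q1 (W w) (A w) (Z w)))) ->
    (\int[P]_w (Hcov pA (W w) (A w) * (b2r R (S w) / rho (W w) (A w) (Z w))
        * (Y w - Q1 (W w) (A w) (Z w)))%:E = 0)%E.
  move=> pA rho mpA mrho i.
  have := @K2 d Omega R P _ _ _ mV3 S mS Y mY _ HQ1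
    (fun x => Hcov pA x.1.1 x.1.2 / rho x.1.1 x.1.2 x.2) _ _.
  - under eq_integral do rewrite /= mulrCA; apply.
  - apply: measurable_realfun.measurable_funM; first exact: mHc3.
    exact: (measurableT_comp (inv_meas R)).
  - by apply: intE i => x /=; rewrite mulrCA.
have F3 : forall pA : TW -> R, measurable_fun setT pA ->
    P.-integrable setT (EFin \o (fun w =>
      Hcov pA (W w) (A w) * (Q1 (W w) (A w) (Z w) - Q2 (W w) (A w)))) ->
    (\int[P]_w (Hcov pA (W w) (A w) * (Q1 (W w) (A w) (Z w) - Q2 (W w) (A w)))%:E = 0)%E.
  move=> pA mpA i.
  exact: (@K1 d Omega R P _ _ _ mV2 _ _ HQ2 (fun x => Hcov pA x.1 x.2) (mHc _ mpA) i).
have F4 : forall F : TW -> bool -> R, measurable_fun setT (fun x : TW * bool => F x.1 x.2) ->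
    P.-integrable setT (EFin \o (fun w =>
      Hcov piA (W w) (A w) * F (W w) (A w) - (F (W w) true - F (W w) false))) ->
    (\int[P]_w (Hcov piA (W w) (A w) * F (W w) (A w) - (F (W w) true - F (W w) false))%:E = 0)%E.
  move=> F mF i.
  have e : forall w, Hcov piA (W w) (A w) * F (W w) (A w) - (F (W w) true - F (W w) false)
    = (F (W w) true / piA (W w) + F (W w) false / (1 - piA (W w))) * (b2r R (A w) - piA (W w)).
    by move=> w; rewrite /Hcov; exact: (alg4 _ _ (F (W w)) (A w) (posA (W w))).
  under eq_integral do rewrite e.
  apply: (@K1 d Omega R P _ _ _ mW _ _ HpiA
    (fun w => F w true / piA w + F w false / (1 - piA w))).
    apply: measurable_realfun.measurable_funD; apply: measurable_realfun.measurable_funM.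
    - rewrite (_ : F^~ true = (fun x : TW * bool => F x.1 x.2) \o (fun w => (w, true))) //.
      by apply: measurableT_comp => //; exact: measurable_fun_pair.
    - exact: (measurableT_comp (inv_meas R)).
    - rewrite (_ : F^~ false = (fun x : TW * bool => F x.1 x.2) \o (fun w => (w, false))) //.
      by apply: measurableT_comp => //; exact: measurable_fun_pair.
    - apply: (measurableT_comp (inv_meas R)).
      exact: measurable_realfun.measurable_funB.
  by apply: intE i => w; rewrite e.
have F2 : forall (pA : TW -> R) (Q : TW -> bool -> TZ -> R),
    measurable_fun setT pA ->
    measurable_fun setT (fun x : TW * bool * TZ => Q x.1.1 x.1.2 x.2) ->
    P.-integrable setT (EFin \o (fun w =>
      Hcov pA (W w) (A w) * (b2r R (S w) / piR (W w) (A w) (Z w)) * (Q1 (W w) (A w) (Z w) - Q (W w) (A w) (Z w))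
      - Hcov pA (W w) (A w) * (Q1 (W w) (A w) (Z w) - Q (W w) (A w) (Z w)))) ->
    (\int[P]_w (Hcov pA (W w) (A w) * (b2r R (S w) / piR (W w) (A w) (Z w)) * (Q1 (W w) (A w) (Z w) - Q (W w) (A w) (Z w))
      - Hcov pA (W w) (A w) * (Q1 (W w) (A w) (Z w) - Q (W w) (A w) (Z w)))%:E = 0)%E.
  move=> pA Q mpA mQ i.
  have e : forall w, Hcov pA (W w) (A w) * (b2r R (S w) / piR (W w) (A w) (Z w)) * (Q1 (W w) (A w) (Z w) - Q (W w) (A w) (Z w))
      - Hcov pA (W w) (A w) * (Q1 (W w) (A w) (Z w) - Q (W w) (A w) (Z w))
    = (Hcov pA (W w) (A w) * (Q1 (W w) (A w) (Z w) - Q (W w) (A w) (Z w)) / piR (W w) (A w) (Z w))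
       * (b2r R (S w) - piR (W w) (A w) (Z w)).
    by move=> w; apply: alg2; rewrite gt_eqF.
  under eq_integral do rewrite e.
  apply: (@K1 d Omega R P _ _ _ mV3 _ _ HpiR
    (fun x => Hcov pA x.1.1 x.1.2 * (Q1 x.1.1 x.1.2 x.2 - Q x.1.1 x.1.2 x.2) / piR x.1.1 x.1.2 x.2)).
    apply: measurable_realfun.measurable_funM.
      apply: measurable_realfun.measurable_funM; first exact: mHc3.
      exact: measurable_realfun.measurable_funB.
    exact: (measurableT_comp (inv_meas R)).
  by apply: intE i => w; rewrite e.
have iq : P.-integrable setT (EFin \o (fun w => Q2 (W w) true - Q2 (W w) false - psi)).
  exact: intB (intB (Hint2 true).2 (Hint2 false).2) (finite_measure_integrable_cst P psi measurableT).
have q0 : (\int[P]_w (Q2 (W w) true - Q2 (W w) false - psi)%:E = 0)%E.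
  under eq_integral do rewrite EFinB.
  rewrite (integralB_EFin measurableT (intB (Hint2 true).2 (Hint2 false).2) (finite_measure_integrable_cst P psi measurableT)).
  rewrite Hpsi.
  have := integral_cst P (@measurableT _ Omega) psi%:E.
  move=> h; rewrite [X in (_ - X)%E]h.
  rewrite [X in (_ * X)%E](_ : _ = 1%E) ?mule1 ?subee //.
  exact: probability_setT.
have iQ1 := HintQ Q1 (or_intror (or_introl erefl)).
have iQ1t := HintQ Q1t (or_introl erefl).
have iQ2 := HintQ (fun w a _ => Q2 w a) (or_intror (or_intror (or_intror erefl))).
have iQ2t := HintQ (fun w a _ => Q2t w a) (or_intror (or_intror (or_introl erefl))).
have iY1 := HintY Q1 (or_intror erefl).
have iY1t := HintY Q1t (or_introl erefl).
have i3 : P.-integrable setT (EFin \o (fun w =>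
      Hcov piAt (W w) (A w) * (Q1 (W w) (A w) (Z w) - Q2 (W w) (A w)))).
  by apply: intE (intB iQ1 iQ2) => w /=; rewrite mulrBr.
have i4 : P.-integrable setT (EFin \o (fun w =>
      Hcov piAt (W w) (A w) * (Q2 (W w) (A w) - Q2t (W w) (A w))
      - ((Q2 (W w) true - Q2t (W w) true) - (Q2 (W w) false - Q2t (W w) false)))).
  apply: intE (intB (intB iQ2 iQ2t) (intB (intB (Hint2 true).2 (Hint2 true).1)
     (intB (Hint2 false).2 (Hint2 false).1))) => w /=.
  exact: alg_i4.
move=> [[e1 e2]|[e1 e2]|[e1 e2]].
-
  rewrite e1 e2.
  under eq_integral do rewrite /Dtilde algD1.
  apply: sum0'.
  + exact: iY1.
  + exact: intD i3 iq.
  + by apply: F1.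
  + apply: sum0' => //; exact: F3.
-
  rewrite e1 e2.
  under eq_integral => x _ do rewrite /Dtilde (algD2 _ _ _ _ (Q1 (W x) (A x) (Z x)) _ (Q2 (W x) (A x)) _ (Q2 (W x) true) _ (Q2 (W x) false)).
  rewrite e1 in F3 i3 i4 iY1 iY1t; rewrite e2 in iY1 iY1t.
  have i2 : P.-integrable setT (EFin \o (fun w =>
      Hcov piA (W w) (A w) * (b2r R (S w) / piR (W w) (A w) (Z w)) * (Q1 (W w) (A w) (Z w) - Q1t (W w) (A w) (Z w))
      - Hcov piA (W w) (A w) * (Q1 (W w) (A w) (Z w) - Q1t (W w) (A w) (Z w)))).
    rewrite e1 in iQ1 iQ1t.
    apply: intE (intB (intB iY1t iY1) (intB iQ1 iQ1t)) => w /=.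
    exact: alg_i2.
  apply: sum0'; [exact: iY1 | exact: intD i2 (intD i3 (intD i4 iq)) | by apply: F1 |].
  apply: sum0'; [exact: i2 | exact: intD i3 (intD i4 iq) | by apply: F2 |].
  apply: sum0'; [exact: i3 | exact: intD i4 iq | by apply: F3 |].
  apply: sum0'; [exact: i4 | exact: iq | | exact: q0].
  apply: (F4 (fun w a => Q2 w a - Q2t w a)) => //.
  exact: measurable_realfun.measurable_funB.
-
  rewrite e1 e2.
  under eq_integral => x _ do rewrite /Dtilde (algD3 _ _ _ _ (Q2 (W x) (A x)) _ (Q2 (W x) true) _ (Q2 (W x) false)).
  rewrite e1 in F3 i3 i4 iY1 iY1t.
  apply: sum0'; [exact: iY1 | exact: intD i3 (intD i4 iq) | by apply: F1 |].
  apply: sum0'; [exact: i3 | exact: intD i4 iq | by apply: F3 |].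
  apply: sum0'; [exact: i4 | exact: iq | | exact: q0].
  apply: (F4 (fun w a => Q2 w a - Q2t w a)) => //.
  exact: measurable_realfun.measurable_funB.
Qed.
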